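(* Let $X$ be a finite $T_0$ topological space of dimension $n$, let $E$ be a $k$-module, let $p\in X$ and let $F=E\otimes_k k_{U_p}$. Then the augmented standard complex $$0\to C_nF\to\cdots\to C_1F\to C_0F\to F\to 0$$ is homotopically trivial (null-homotopic), where $C_iF=\bigoplus_{p_0<\dots<p_i} F_{p_0}\otimes_k k_{U_{p_i}}$.
   Context: $k$ is a commutative ring. A finite $T_0$ space $X$ is regarded as a poset with $x\le y$ iff $x$ lies in the closure of $y$; $U_x=\{y: y\ge x\}$ is the smallest open set containing $x$, and $\dim X$ is the maximal length $i$ of a chain $x_0<\dots<x_i$. Sheaves are sheaves of $k$-modules on $X$; for an open set $U$, $k_U$ denotes the constant sheaf $k$ extended by zero outside $U$; $F_x$ is the stalk at $x$, and $E\otimes_k F$ is the sheaf with stalks $E\otimes_k F_x$. For $x\le y$, $r_{xy}:F_x\to F_y$ are the restriction maps and $k_{U_y}\hookrightarrow k_{U_x}$ is the natural inclusion. The standard complex $C_\bullet F$ has $C_iF=\bigoplus_{p_0<\dots<p_i} F_{p_0}\otimes_k k_{U_{p_i}}$ (sum over chains of length $i$), with differential the alternating sum of face maps (omitting $p_0$ uses $r_{p_0p_1}$, omitting $p_i$ uses the inclusion $k_{U_{p_i}}\hookrightarrow k_{U_{p_{i-1}}}$, other faces are identities), and augmentation $C_0F=\bigoplus_x F_x\otimes_k k_{U_x}\to F$ the natural map. *)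

(* Defs.v *)
Set Warnings "-redundant-canonical-projection -notation-overridden -ambiguous-paths".
From HB Require Import structures.
From mathcomp Require Import all_boot all_order all_algebra.
Set Implicit Arguments. Unset Strict Implicit. Unset Printing Implicit Defensive.
Import Order.TTheory GRing.Theory.
Local Open Scope ring_scope.

Section DProd.
Variables (R : pzRingType) (I : finType) (M : I -> lmodType R).

Definition dprod := {dffun forall i : I, M i}.
HB.instance Definition _ := Choice.on dprod.

Definition dp_zero : dprod := [ffun i => 0].
Definition dp_opp (f : dprod) : dprod := [ffun i => - f i].
Definition dp_add (f g : dprod) : dprod := [ffun i => f i + g i].
Definition dp_scale (a : R) (f : dprod) : dprod := [ffun i => a *: f i].

Lemma dp_addA : associative dp_add.
Proof. by move=> f g h; apply/ffunP => i; rewrite !ffunE addrA. Qed.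
Lemma dp_addC : commutative dp_add.
Proof. by move=> f g; apply/ffunP => i; rewrite !ffunE addrC. Qed.
Lemma dp_add0 : left_id dp_zero dp_add.
Proof. by move=> f; apply/ffunP => i; rewrite !ffunE add0r. Qed.
Lemma dp_addN : left_inverse dp_zero dp_opp dp_add.
Proof. by move=> f; apply/ffunP => i; rewrite !ffunE addNr. Qed.

HB.instance Definition _ :=
  GRing.isZmodule.Build dprod dp_addA dp_addC dp_add0 dp_addN.

Lemma dp_scaleA a b (f : dprod) : dp_scale a (dp_scale b f) = dp_scale (a * b) f.
Proof. by apply/ffunP => i; rewrite !ffunE scalerA. Qed.
Lemma dp_scale1 : left_id 1 dp_scale.
Proof. by move=> f; apply/ffunP => i; rewrite !ffunE scale1r. Qed.
Lemma dp_scaleDr : right_distributive dp_scale +%R.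
Proof. by move=> a f g; apply/ffunP => i; rewrite !ffunE scalerDr. Qed.
Lemma dp_scaleDl (f : dprod) : {morph dp_scale^~ f : a b / a + b}.
Proof. by move=> a b; apply/ffunP => i; rewrite !ffunE scalerDl. Qed.

HB.instance Definition _ :=
  GRing.Zmodule_isLmodule.Build R dprod dp_scaleA dp_scale1 dp_scaleDr dp_scaleDl.
End DProd.

Definition zmod0 (R : pzRingType) : lmodType R :=
  [the lmodType R of dprod (fun v : void => match v with end : lmodType R)].

Lemma zmod0_eq0 (R : pzRingType) (v : zmod0 R) : v = 0.
Proof. by apply/ffunP => -[]. Qed.

(* Sheaves of k-modules on a finite T0 space X, viewed as a finite poset
   (x <= y iff x lies in the closure of y).  Such a sheaf is given by its
   stalks F_x and restriction maps r_xy : F_x -> F_y for x <= y, functorial.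
   (res x y is only meaningful when x <= y.) *)
Section Sheaves.
Local Unset Implicit Arguments.
Variables (R : comPzRingType) (d : Order.disp_t) (X : finPOrderType d).

Record sheaf := Sheaf {
  stalk : X -> lmodType R;
  res : forall x y : X, stalk x -> stalk y;
  res_lin : forall x y, linear (res x y);
  res_id : forall x v, res x x v = v;
  res_comp : forall x y z : X, (x <= y)%O -> (y <= z)%O ->
    forall v, res x z v = res y z (res x y v) }.

Record shom (F G : sheaf) := SHom {
  hmap : forall x, stalk F x -> stalk G x;
  hmap_lin : forall x, linear (hmap x);
  hmap_nat : forall x y : X, (x <= y)%O ->
    forall v, hmap y (res F x y v) = res G x y (hmap x v) }.
Arguments hmap {F G} s x.

(* The stalk at x of  M (x) k_U  (U open): M if x \in U, 0 otherwise. *)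
Definition ext0 (b : bool) (M : lmodType R) : lmodType R :=
  if b then M else zmod0 R.

Definition ext0_map (b b' : bool) (M N : lmodType R) (h : M -> N) :
    ext0 b M -> ext0 b' N :=
  match b, b' return ext0 b M -> ext0 b' N with
  | true, true => h
  | _, _ => fun _ => 0
  end.
Arguments ext0_map b b' {M N} h.

Definition ext0_out (b : bool) (M N : lmodType R) (h : M -> N) :
    ext0 b M -> N :=
  match b return ext0 b M -> N with
  | true => h
  | false => fun _ => 0
  end.
Arguments ext0_out b {M N} h.

(* Finite direct sum  \bigoplus_{j in J} M_j (x) k_{U_{q j}}  *)
Section DSum.
Variables (J : finType) (M : J -> lmodType R) (q : J -> X).

Definition dsum_stalk (x : X) : lmodType R :=
  [the lmodType R of dprod (fun j : J => ext0 (q j <= x)%O (M j))].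

Definition dsum_res (x y : X) (f : dsum_stalk x) : dsum_stalk y :=
  [ffun j => ext0_map (q j <= x)%O (q j <= y)%O id (f j)].

Lemma dsum_res_lin x y : linear (dsum_res x y).
Proof.
move=> a f g; apply/ffunP => j; rewrite !ffunE /=.
move: (f j) (g j); rewrite /ext0_map /ext0.
by case: (q j <= x)%O; case: (q j <= y)%O => //= u v; rewrite scaler0 addr0.
Qed.

Lemma dsum_res_id x v : dsum_res x x v = v.
Proof.
apply/ffunP => j; rewrite !ffunE /=; move: (v j); rewrite /ext0_map /ext0.
by case: (q j <= x)%O => //= u; rewrite [RHS]zmod0_eq0.
Qed.

Lemma dsum_res_comp x y z : (x <= y)%O -> (y <= z)%O ->
  forall v, dsum_res x z v = dsum_res y z (dsum_res x y v).
Proof.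
move=> xy yz v; apply/ffunP => j; rewrite !ffunE /=.
have qxy : (q j <= x)%O -> (q j <= y)%O by move=> h; exact: le_trans xy.
have qyz : (q j <= y)%O -> (q j <= z)%O by move=> h; exact: le_trans yz.
move: (v j) qxy qyz; rewrite /ext0_map /ext0.
case: (q j <= x)%O; case: (q j <= y)%O; case: (q j <= z)%O => //= u h1 h2;
  by [ have := h1 isT | have := h2 isT ].
Qed.

Definition dsum : sheaf :=
  Sheaf dsum_stalk dsum_res dsum_res_lin dsum_res_id dsum_res_comp.
End DSum.
Arguments dsum {J} M q.

Definition tensU (E : lmodType R) (p : X) : sheaf :=
  dsum (fun _ : unit => E) (fun _ => p).

Definition chain (i : nat) := {t : i.+1.-tuple X | sorted (fun a b => a < b)%O t}.
Definition chead i (c : chain i) : X := tnth (val c) ord0.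
Definition clast i (c : chain i) : X := tnth (val c) ord_max.
Arguments chead {i} c.
Arguments clast {i} c.

Definition dimX (n : nat) : Prop :=
  inhabited (chain n) /\ forall m, chain m -> (m <= n)%N.

Definition stdC (F : sheaf) (i : nat) : sheaf :=
  dsum (fun c : chain i => stalk F (chead c)) (@clast i).

Definition face_of i (c : chain i.+1) (j : nat) (c' : chain i) : bool :=
  (val c' : seq X) == take j (val c) ++ drop j.+1 (val c).
Arguments face_of {i} c j c'.

(* differential C_{i+1} F -> C_i F on stalks at x: alternating sum of faces;
   omitting p_0 uses r_{p_0 p_1}, the other faces are identities
   (written r_{p_0 p_0}) on the F_{p_0} factor, and the inclusions of the
   k_U factors are built into ext0_map. *)
Definition stdd (F : sheaf) (i : nat) (x : X) :
    stalk (stdC F i.+1) x -> stalk (stdC F i) x :=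
  fun f => [ffun c' : chain i =>
    \sum_(c : chain i.+1) \sum_(j < i.+2 | face_of c j c')
       ((-1) ^+ j : R) *:
       ext0_map (clast c <= x)%O (clast c' <= x)%O
         (res F (chead c) (chead c')) (f c)].

Definition stdeps (F : sheaf) (x : X) : stalk (stdC F 0) x -> stalk F x :=
  fun f => \sum_(c : chain 0)
    ext0_out (clast c <= x)%O (res F (chead c) x) (f c).

Definition aug (F : sheaf) (i : nat) : sheaf :=
  match i with 0 => F | i'.+1 => stdC F i' end.

Definition augd (F : sheaf) (i : nat) :
    forall x, stalk (aug F i.+1) x -> stalk (aug F i) x :=
  match i as n return forall x, stalk (aug F n.+1) x -> stalk (aug F n) x with
  | 0 => stdeps F
  | i'.+1 => stdd F i'
  end.

Definition aug_null_homotopic (F : sheaf) : Prop :=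
  exists h : forall i, shom (aug F i) (aug F i.+1),
    (forall x v, augd F 0 x (hmap (h 0) x v) = v) /\
    (forall i x v,
       augd F i.+1 x (hmap (h i.+1) x v) + hmap (h i) x (augd F i x v) = v).

End Sheaves.
Arguments dimX {d} X n.
Arguments tensU {R d X} E p.
Arguments aug_null_homotopic {R d X} F.

(* Main.v *)
Set Warnings "-notation-overridden -ambiguous-paths -redundant-canonical-projection".
Require Import Defs.
From HB Require Import structures.
From mathcomp Require Import all_boot all_order all_algebra.
Set Implicit Arguments. Unset Strict Implicit. Unset Printing Implicit Defensive.
Import Order.TTheory GRing.Theory.
Local Open Scope ring_scope.
Section Lin.
Variables (k : comPzRingType) (M N : lmodType k) (f : M -> N) (fL : linear f).
Lemma lin0 : f 0 = 0.
Proof.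
have := fL 1 0 0; rewrite /= !scale1r addr0 => h.
by have := congr1 (fun z => z - f 0) h; rewrite /= subrr addrK.
Qed.
Lemma linD u v : f (u + v) = f u + f v.
Proof. by have := fL 1 u v; rewrite /= !scale1r. Qed.
Lemma linZ a u : f (a *: u) = a *: f u.
Proof. by have := fL a u 0; rewrite /= !addr0 lin0 addr0. Qed.
Lemma lin_sum (I : Type) (r : seq I) (P : pred I) (F : I -> M) :
  f (\sum_(i <- r | P i) F i) = \sum_(i <- r | P i) f (F i).
Proof. exact: (big_morph f linD lin0). Qed.
End Lin.

Section DP.
Variables (R : pzRingType) (I : finType) (M : I -> lmodType R).
Lemma dpD (u v : dprod M) i : (u + v) i = u i + v i.
Proof. exact: ffunE. Qed.
Lemma dpZ a (u : dprod M) i : (a *: u) i = a *: u i.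
Proof. exact: ffunE. Qed.
Lemma dp0 i : (0 : dprod M) i = 0.
Proof. exact: ffunE. Qed.
End DP.

Section Ext.
Variable k : comPzRingType.
Definition get0 b (M : lmodType k) : ext0 k b M -> M := ext0_out k b M M id.
Definition put0 b (M : lmodType k) : M -> ext0 k b M := ext0_map k true b M M id.
Lemma get0K b M (w : ext0 k b M) : put0 b (get0 w) = w.
Proof. by case: b w => //= w; symmetry; apply: zmod0_eq0. Qed.
Lemma get0F M (w : ext0 k false M) : get0 w = 0.
Proof. by []. Qed.
Lemma get0_lin b M : linear (@get0 b M).
Proof. by case: b => //= a u v; rewrite scaler0 addr0. Qed.
Lemma get0_map b b' M N h (hL : linear h) (w : ext0 k b M) :
  get0 (ext0_map k b b' M N h w) = if b' then h (get0 w) else 0.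
Proof. by case: b b' w => [] [] //= w; rewrite lin0. Qed.
Lemma get0_put b (M : lmodType k) (m : M) : get0 (put0 b m) = if b then m else 0.
Proof. by case: b. Qed.
Lemma ext0_outE b M N h (w : ext0 k b M) : ext0_out k b M N h w = if b then h (get0 w) else 0.
Proof. by case: b w. Qed.
End Ext.
Section Chains.
Variables (d : Order.disp_t) (X : finPOrderType d).
Local Notation chain := (chain d X).
Local Notation chead := (chead d X _).
Local Notation clast := (clast d X _).
Local Notation face_of := (face_of d X _).
Definition cseq i (c : chain i) : seq X := (val c : seq X).

Lemma chain_inj i (c c' : chain i) : cseq c = cseq c' -> c = c'.
Proof. by move=> h; apply: val_inj; apply: val_inj. Qed.

Lemma cseq_sorted i (c : chain i) : sorted (fun a b => a < b)%O (cseq c).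
Proof. exact: (valP c). Qed.

Lemma size_cseq i (c : chain i) : size (cseq c) = i.+1.
Proof. exact: size_tuple. Qed.

Lemma cseqE i (c : chain i) : cseq c = chead c :: behead (cseq c).
Proof. by case: c => [[[|x s] sz] srt]. Qed.

Lemma ctail_proof i (c : chain i.+1) :
  sorted (fun a b => a < b)%O (behead_tuple (val c)).
Proof.
have := cseq_sorted c; rewrite (cseqE c) /=.
by move/path_sorted.
Qed.

Definition ctail i (c : chain i.+1) : chain i :=
  exist _ (behead_tuple (val c)) (ctail_proof c).

Lemma cseq_tail i (c : chain i.+1) : cseq (ctail c) = behead (cseq c).
Proof. by []. Qed.

Lemma cseqS i (c : chain i.+1) : cseq c = chead c :: cseq (ctail c).
Proof. exact: cseqE. Qed.

Lemma chead_nth i (c : chain i) x0 : chead c = nth x0 (cseq c) 0.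
Proof. by rewrite /Defs.chead (tnth_nth x0). Qed.
Lemma clast_nth i (c : chain i) x0 : clast c = nth x0 (cseq c) i.
Proof. by rewrite /Defs.clast (tnth_nth x0). Qed.

Lemma clast_tail i (c : chain i.+1) : clast (ctail c) = clast c.
Proof. by rewrite !(clast_nth _ (chead c)) (cseqS c). Qed.

Lemma chain0E (c : chain 0) : cseq c = [:: chead c].
Proof. by rewrite cseqE; case: c => [[[|x [|y s]] sz] srt]. Qed.

Lemma chead0 (c : chain 0) : clast c = chead c.
Proof. by rewrite (clast_nth _ (chead c)) chain0E. Qed.

Lemma chain_bounds i (c : chain i) y : y \in cseq c ->
  (chead c <= y)%O && (y <= clast c)%O.
Proof.
move=> yc.
have srt : sorted (fun a b => a <= b)%O (cseq c).
  by apply: sub_sorted (cseq_sorted c) => a b /ltW.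
have hle := sorted_leq_nth le_trans (@lexx _ X) y srt.
have e := nth_index y yc.
have ix : (index y (cseq c) < size (cseq c))%N by rewrite index_mem.
rewrite (chead_nth _ y) (clast_nth _ y); apply/andP; split.
  by rewrite -[X in (_ <= X)%O]e hle // inE /= size_cseq.
rewrite -[X in (X <= _)%O]e hle //; first by rewrite inE /= size_cseq.
by rewrite -ltnS -(size_cseq c).
Qed.

Lemma chead_le_last i (c : chain i) : (chead c <= clast c)%O.
Proof.
have : chead c \in cseq c by rewrite cseqE mem_head.
by move/chain_bounds => /andP[].
Qed.

Lemma chead_lt i (c : chain i.+1) : (chead c < chead (ctail c))%O.
Proof.
have := cseq_sorted c; rewrite (cseqS c) (cseqE (ctail c)) /=.
by case/andP.
Qed.

Lemma face_sub i (c : chain i.+1) j (c' : chain i) y :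
  face_of c j c' -> y \in cseq c' -> y \in cseq c.
Proof.
rewrite /Defs.face_of => /eqP h; rewrite /cseq h mem_cat.
by case/orP => [/mem_take|/mem_drop].
Qed.

Lemma face_head i (c : chain i.+1) j (c' : chain i) :
  face_of c j c' -> (chead c <= chead c')%O.
Proof.
move=> f; have : chead c' \in cseq c by apply: (face_sub f); rewrite cseqE mem_head.
by case/chain_bounds/andP.
Qed.

Lemma face_last i (c : chain i.+1) j (c' : chain i) :
  face_of c j c' -> (clast c' <= clast c)%O.
Proof.
move=> f; have : clast c' \in cseq c.
  apply: (face_sub f); rewrite (clast_nth _ (clast c')) mem_nth // size_cseq //.
by case/chain_bounds/andP.
Qed.

Lemma face0 i (c : chain i.+1) (c' : chain i) : face_of c 0 c' = (c' == ctail c).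
Proof.
rewrite /Defs.face_of take0 drop1 /=; apply/eqP/eqP => [h|->] //.
by apply: chain_inj; rewrite cseq_tail /cseq h.
Qed.

Lemma faceS i (c : chain i.+2) j (c' : chain i.+1) :
  face_of c j.+1 c' = (chead c' == chead c) && face_of (ctail c) j (ctail c').
Proof.
rewrite /Defs.face_of -/(cseq c') -/(cseq c) -/(cseq (ctail c')) -/(cseq (ctail c)).
by rewrite (cseqS c) (cseqS c') /= eqseq_cons.
Qed.

Lemma face1_0 (c : chain 1) (c' : chain 0) : face_of c 1 c' = (chead c' == chead c).
Proof.
rewrite /Defs.face_of -/(cseq c') -/(cseq c).
rewrite (cseqS c) chain0E /= (chain0E (ctail c)) /= eqseq_cons andbT //.
Qed.

Lemma face_headS i (c : chain i.+1) j (c' : chain i) :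
  face_of c j.+1 c' -> chead c' = chead c.
Proof.
rewrite /Defs.face_of -/(cseq c') -/(cseq c) (cseqS c) (cseqE c') /=.
by move/eqP => [].
Qed.

Section Cons.
Variable p : X.
Lemma ccons_proof m (c1 : chain m) (h : (p < chead c1)%O) :
  sorted (fun a b => a < b)%O (cons_tuple p (val c1)).
Proof.
change (sorted (fun a b => a < b)%O (p :: cseq c1)).
have := cseq_sorted c1; rewrite (cseqE c1) /= h => -> //.
Qed.

Lemma sum_cons (V : zmodType) m (c1 : chain m) (a : V) :
  \sum_(c : chain m.+1 | (chead c == p) && (ctail c == c1)) a =
  if (p < chead c1)%O then a else 0.
Proof.
case: ifP => h.
  pose c0 : chain m.+1 := exist _ (cons_tuple p (val c1)) (ccons_proof h).
  have Hc0 : forall c : chain m.+1, (chead c == p) && (ctail c == c1) = (c == c0).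
    move=> c; apply/andP/eqP => [[/eqP hp /eqP ht]|->].
      by apply: chain_inj; rewrite (cseqS c) hp ht.
    split; first by rewrite /Defs.chead (tnth_nth p).
    by apply/eqP; apply: chain_inj.
  by rewrite (eq_bigl _ _ Hc0) big_pred1_eq.
apply: big1 => c /andP[/eqP hp /eqP ht].
by have := chead_lt c; rewrite hp ht h.
Qed.

Lemma sum_hd (V : zmodType) m (G : chain m -> V) :
  \sum_(c : chain m.+1 | chead c == p) G (ctail c) =
  \sum_(c1 : chain m | (p < chead c1)%O) G c1.
Proof.
rewrite (partition_big (@ctail m) predT) //=.
rewrite [RHS]big_mkcond /=; apply: eq_bigr => c1 _.
rewrite -(sum_cons c1 (G c1)); apply: eq_bigr => c /andP[_ /eqP ->] //.
Qed.

Lemma sum_hd0 (V : zmodType) (a : V) :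
  \sum_(c : chain 0 | chead c == p) a = a.
Proof.
pose c0 : chain 0 := exist _ [tuple p] (erefl true).
have Hc0 : forall c : chain 0, (chead c == p) = (c == c0).
  move=> c; apply/eqP/eqP => [hp|->]; last by [].
  by apply: chain_inj; rewrite chain0E hp.
by rewrite (eq_bigl _ _ Hc0) big_pred1_eq.
Qed.
End Cons.
End Chains.

Section Main.
Variables (k : comPzRingType) (d : Order.disp_t) (X : finPOrderType d)
  (E : lmodType k) (p : X).
Local Notation F := (tensU E p).
Local Notation chain := (chain d X).
Local Notation chead := (chead d X _).
Local Notation clast := (clast d X _).
Local Notation face_of := (face_of d X _).
Local Notation stalk := (stalk k d X).
Local Notation stdC := (stdC k d X F).

Definition vF x (v : stalk F x) : E :=
  get0 ((v : dprod (fun _ : unit => ext0 k (p <= x)%O E)) tt).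

Arguments vF : clear implicits.

Definition putF x (e : E) : stalk F x :=
  finfun (fun _ : unit => put0 (p <= x)%O e).

Lemma vF_ext x (v w : stalk F x) : vF x v = vF x w -> v = w.
Proof.
move=> h; apply/ffunP => -[].
by rewrite -[v tt]get0K -[w tt]get0K; congr put0.
Qed.

Lemma vF_put x e : vF x (putF x e) = if (p <= x)%O then e else 0.
Proof. by rewrite /vF ffunE get0_put. Qed.

Lemma vF_supp x v : vF x v = if (p <= x)%O then vF x v else 0.
Proof. by rewrite /vF; case: (p <= x)%O (v tt). Qed.

Lemma vF_lin x : linear (vF x).
Proof. by move=> a u v; rewrite /vF dpD dpZ get0_lin. Qed.

Lemma vF_res x y v : vF y (res k d X F x y v) = if (p <= y)%O then vF x v else 0.
Proof. by rewrite /vF /= /dsum_res ffunE get0_map. Qed.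

Lemma res_F_lin x y : linear (res k d X F x y).
Proof. exact: res_lin. Qed.

Lemma vF0 x : vF x 0 = 0.
Proof. exact: (lin0 (@vF_lin x)). Qed.

Definition vC i x (f : stalk (stdC i) x) (c : chain i) : E :=
  vF (chead c) (get0 ((f : dprod (fun c : chain i =>
      ext0 k (clast c <= x)%O (stalk F (chead c)))) c)).
Arguments vC : clear implicits.

Definition mkC i x (g : chain i -> E) : stalk (stdC i) x :=
  @finfun _ (fun c : chain i => ext0 k (clast c <= x)%O (stalk F (chead c)))
    (fun c => put0 (clast c <= x)%O (putF (chead c) (g c))).

Lemma vC_mk i x g c :
  vC i x (mkC x g) c = if (clast c <= x)%O && (p <= chead c)%O then g c else 0.
Proof.
rewrite /vC ffunE get0_put; case: ifP => _; first by rewrite vF_put.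
by rewrite vF0.
Qed.

Lemma vC_ext i x (f f' : stalk (stdC i) x) :
  (forall c, vC i x f c = vC i x f' c) -> f = f'.
Proof.
move=> h; apply/ffunP => c.
rewrite -[f c]get0K -[f' c]get0K; congr put0; apply: vF_ext; exact: h.
Qed.

Lemma vC_supp i x f c :
  vC i x f c = if (clast c <= x)%O && (p <= chead c)%O then vC i x f c else 0.
Proof.
rewrite /vC; case: (clast c <= x)%O (f c) => w /=; first exact: vF_supp.
exact: vF0.
Qed.

Lemma vC_lin i x c : linear (fun f => vC i x f c).
Proof.
move=> a u v; rewrite /vC /= dpD dpZ get0_lin /=.
by rewrite (@vF_lin (chead c)).
Qed.

Lemma vCD i x c u v : vC i x (u + v) c = vC i x u c + vC i x v c.
Proof. exact: (linD (@vC_lin i x c)). Qed.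
Lemma vCZ i x c a u : vC i x (a *: u) c = a *: vC i x u c.
Proof. exact: (linZ (@vC_lin i x c)). Qed.

Lemma vC_res i x y f c :
  vC i y (res k d X (stdC i) x y f) c = if (clast c <= y)%O then vC i x f c else 0.
Proof.
rewrite /vC /= /dsum_res ffunE get0_map //; case: ifP => // _; exact: vF0.
Qed.

Lemma vC_stdd i x f c' :
  vC i x (stdd k d X F i x f) c' =
  \sum_(c : chain i.+1) \sum_(j < i.+2 | face_of c j c')
     ((-1) ^+ j : k) *: vC i.+1 x f c.
Proof.
rewrite {1}/vC /stdd ffunE (lin_sum (@get0_lin _ _ _)) (lin_sum (@vF_lin _)).
apply: eq_bigr => c _.
rewrite (lin_sum (@get0_lin _ _ _)) (lin_sum (@vF_lin _)).
apply: eq_bigr => j hf.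
rewrite (linZ (@get0_lin _ _ _)) (linZ (@vF_lin _)); congr (_ *: _).
rewrite get0_map; last exact: res_lin.
rewrite [RHS]vC_supp.
case: ifP => hl; last first.
  rewrite vF0; case: ifP => // /andP[hl' _].
  by move: hl; rewrite (le_trans (face_last hf) hl').
rewrite vF_res; case: ifP => hp.
  by rewrite -vC_supp.
case: ifP => // /andP[_ hp'].
by move: hp; rewrite (le_trans hp' (face_head hf)).
Qed.

Lemma vF_stdeps x f :
  vF x (stdeps k d X F x f) = \sum_(c : chain 0) vC 0 x f c.
Proof.
rewrite /stdeps (lin_sum (@vF_lin x)); apply: eq_bigr => c _.
rewrite ext0_outE; case: ifP => hl; last by rewrite vF0 vC_supp hl.
rewrite vF_res; case: ifP => hp //.
rewrite vC_supp hl /=; case: ifP => // hp'.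
by move: hp; rewrite (le_trans hp' (le_trans (chead_le_last c) hl)).
Qed.

Definition hS i x (f : stalk (stdC i) x) : stalk (stdC i.+1) x :=
  mkC x (fun c : chain i.+1 => if chead c == p then vC i x f (ctail c) else 0).
Definition h0 x (v : stalk F x) : stalk (stdC 0) x :=
  mkC x (fun c : chain 0 => if chead c == p then vF x v else 0).

Lemma vC_hS i x f c :
  vC i.+1 x (hS f) c = if chead c == p then vC i x f (ctail c) else 0.
Proof.
rewrite vC_mk; case: eqP => [hp|]; rewrite ?if_same //.
rewrite hp lexx andbT; case: ifP => // hl.
by rewrite vC_supp clast_tail hl.
Qed.

Lemma vC_h0 x v c :
  vC 0 x (h0 v) c = if chead c == p then vF x v else 0.
Proof.
rewrite vC_mk; case: eqP => [hp|]; rewrite ?if_same //.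
rewrite hp lexx andbT chead0 hp [RHS]vF_supp; by case: ifP.
Qed.

Lemma hS_lin i x : linear (@hS i x).
Proof.
move=> a u v; apply: vC_ext => c.
rewrite vCD vCZ !vC_hS vCD vCZ; case: ifP => _ //.
by rewrite scaler0 addr0.
Qed.

Lemma hS_nat i x y : (x <= y)%O -> forall f,
  hS (res k d X (stdC i) x y f) = res k d X (stdC i.+1) x y (hS f).
Proof.
move=> hxy f; apply: vC_ext => c.
rewrite vC_hS vC_res vC_res vC_hS clast_tail.
by case: ifP => _; case: ifP.
Qed.

Lemma h0_lin x : linear (@h0 x).
Proof.
move=> a u v; apply: vC_ext => c.
rewrite vCD vCZ !vC_h0 (@vF_lin x); case: ifP => _ //.
by rewrite scaler0 addr0.
Qed.

Lemma h0_nat x y : (x <= y)%O -> forall v,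
  h0 (res k d X F x y v) = res k d X (stdC 0) x y (h0 v).
Proof.
move=> hxy v; apply: vC_ext => c.
rewrite vC_h0 vC_res vC_h0 vF_res chead0.
by case: eqP => [->|]; case: ifP.
Qed.

Definition H0 : shom k d X F (stdC 0) := SHom k d X F (stdC 0) h0 h0_lin h0_nat.
Definition HS i : shom k d X (stdC i) (stdC i.+1) :=
  SHom k d X (stdC i) (stdC i.+1) (@hS i) (@hS_lin i) (@hS_nat i).
Definition hh (i : nat) : shom k d X (aug k d X F i) (aug k d X F i.+1) :=
  match i with 0 => H0 | i'.+1 => HS i' end.

Lemma first_step m (G : chain m -> E) (c' : chain m) :
  \sum_(c : chain m.+1) \sum_(j < m.+2 | face_of c j c')
      ((-1) ^+ j : k) *: (if chead c == p then G (ctail c) else 0)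
  = (if (p < chead c')%O then G c' else 0)
    - \sum_(c : chain m.+1 | chead c == p)
        \sum_(j < m.+1 | face_of c j.+1 c') ((-1) ^+ j : k) *: G (ctail c).
Proof.
have split1 : forall c : chain m.+1,
  \sum_(j < m.+2 | face_of c j c') ((-1) ^+ j : k) *:
      (if chead c == p then G (ctail c) else 0)
  = (if face_of c 0 c' then (if chead c == p then G (ctail c) else 0) else 0)
    - (if chead c == p then \sum_(j < m.+1 | face_of c j.+1 c')
          ((-1) ^+ j : k) *: G (ctail c) else 0).
  move=> c; rewrite big_mkcond big_ord_recl /= expr0 scale1r; congr (_ + _).
  case: eqP => _; last first.
    rewrite oppr0; apply: big1 => j _; rewrite scaler0; by case: ifP.
  transitivity (\sum_(i < m.+1) (if face_of c i.+1 c'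
      then (-1) ^+ i.+1 *: G (ctail c) else 0) : E); first by [].
  rewrite -sumrN [RHS]big_mkcond; apply: eq_bigr => j _ /=.
  by rewrite exprS mulN1r scaleNr; case: ifP; rewrite ?oppr0.
under eq_bigr => c _ do rewrite split1.
rewrite big_split /= sumrN; congr (_ - _).
  rewrite -(@sum_cons _ _ p _ _ c' (G c')) [RHS]big_mkcond.
  apply: eq_bigr => c _; rewrite face0 eq_sym.
  by case: eqP => [->|_]; rewrite ?andbT ?andbF.
by rewrite [RHS]big_mkcond.
Qed.

Lemma combS m (g : chain m.+1 -> E)
  (Hs : forall c, g c = if (p <= chead c)%O then g c else 0) (c' : chain m.+1) :
  \sum_(c : chain m.+2) \sum_(j < m.+3 | face_of c j c')
      ((-1) ^+ j : k) *: (if chead c == p then g (ctail c) else 0)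
  + (if chead c' == p then \sum_(c1 : chain m.+1)
        \sum_(j < m.+2 | face_of c1 j (ctail c')) ((-1) ^+ j : k) *: g c1
     else 0) = g c'.
Proof.
rewrite first_step.
set A := fun c1 : chain m.+1 =>
  \sum_(j < m.+2 | face_of c1 j (ctail c')) ((-1) ^+ j : k) *: g c1.
have -> : \sum_(c : chain m.+2 | chead c == p)
     \sum_(j < m.+2 | face_of c j.+1 c') ((-1) ^+ j : k) *: g (ctail c)
   = if chead c' == p then \sum_(c1 : chain m.+1 | (p < chead c1)%O) A c1 else 0.
  rewrite -(@sum_hd _ _ p). case: eqP => hc'.
    apply: eq_bigr => c /eqP hc; rewrite /A; apply: eq_bigl => j.
    by rewrite faceS hc hc' eqxx.
  apply: big1 => c /eqP hc; apply: big1 => j; rewrite faceS hc.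
  by case/andP => /eqP.
case: eqP => hc'; last first.
  rewrite subr0 addr0 [RHS]Hs le_eqVlt; case: eqP => [h|_] //.
  by case: hc'.
rewrite hc' ltxx sub0r /A.
rewrite [X in _ + X](bigID (fun c1 => (p < chead c1)%O)) /= addrA addNr add0r.
rewrite (bigD1 c') /=; last by rewrite hc' ltxx.
rewrite [X in _ + X]big1 ?addr0.
  rewrite big_mkcond big_ord_recl /= face0 eqxx expr0 scale1r big1 ?addr0 //.
  move=> j _; case: ifP => // /face_headS h.
  by have := chead_lt c'; rewrite h ltxx.
move=> c1 /andP[hlt hne]; apply: big1 => j hf.
rewrite [g c1]Hs; case: ifP => hp; last by rewrite scaler0.
have hh : chead c1 = p.
  move: hp; rewrite le_eqVlt; case/orP => [/eqP <-|h] //.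
  by rewrite h in hlt.
exfalso; move: hf; case: j => [[|j] hj] /= hf.
  rewrite face0 in hf; move/negP: hne; apply; apply/eqP; apply: chain_inj.
  by rewrite (cseqS c1) (cseqS c') hh hc' (eqP hf).
have := face_headS hf; rewrite hh => h.
by have := chead_lt c'; rewrite h hc' ltxx.
Qed.

Lemma comb0 (g : chain 0 -> E)
  (Hs : forall c, g c = if (p <= chead c)%O then g c else 0) (c' : chain 0) :
  \sum_(c : chain 1) \sum_(j < 2 | face_of c j c')
      ((-1) ^+ j : k) *: (if chead c == p then g (ctail c) else 0)
  + (if chead c' == p then \sum_(c1 : chain 0) g c1 else 0) = g c'.
Proof.
rewrite first_step.
have -> : \sum_(c : chain 1 | chead c == p)
     \sum_(j < 1 | face_of c j.+1 c') ((-1) ^+ j : k) *: g (ctail c)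
   = if chead c' == p then \sum_(c1 : chain 0 | (p < chead c1)%O) g c1 else 0.
  rewrite -(@sum_hd _ _ p). case: eqP => hc'.
    apply: eq_bigr => c /eqP hc.
    by rewrite big_mkcond big_ord1 /= face1_0 hc hc' eqxx expr0 scale1r.
  apply: big1 => c /eqP hc; rewrite big_mkcond big_ord1 /= face1_0 hc.
  by case: eqP.
case: eqP => hc'; last first.
  rewrite subr0 addr0 [RHS]Hs le_eqVlt; case: eqP => [h|_] //.
  by case: hc'.
rewrite hc' ltxx sub0r.
rewrite [X in _ + X](bigID (fun c1 => (p < chead c1)%O)) /= addrA addNr add0r.
rewrite (bigD1 c') /=; last by rewrite hc' ltxx.
rewrite [X in _ + X]big1 ?addr0 // => c1 /andP[hlt hne].
rewrite Hs; case: ifP => // hp; exfalso.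
have hh : chead c1 = p.
  move: hp; rewrite le_eqVlt; case/orP => [/eqP <-|h] //.
  by rewrite h in hlt.
move/negP: hne; apply; apply/eqP; apply: chain_inj.
by rewrite !chain0E hh hc'.
Qed.

Lemma vC_suppH i x f c :
  vC i x f c = if (p <= chead c)%O then vC i x f c else 0.
Proof.
rewrite vC_supp; case: (p <= chead c)%O; rewrite ?andbT ?andbF ?if_same //.
Qed.
End Main.

Theorem proposition1p4 (k : comPzRingType) (d : Order.disp_t)
  (X : finPOrderType d) (n : nat) (E : lmodType k) (p : X) :
  dimX X n ->
  aug_null_homotopic (tensU E p).
Proof.
move=> _; exists (@hh k d X E p); split.
  move=> x v /=; apply: vF_ext; rewrite vF_stdeps.
  under eq_bigr => c _ do rewrite vC_h0.
  by rewrite -big_mkcond sum_hd0.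
move=> [|i] x v /=.
  apply: vC_ext => c'; rewrite vCD vC_stdd vC_h0 vF_stdeps.
  under eq_bigr => c _ do under eq_bigr => j _ do rewrite vC_hS.
  by apply: comb0 => c; rewrite -vC_suppH.
apply: vC_ext => c'; rewrite vCD vC_stdd vC_hS vC_stdd.
under eq_bigr => c _ do under eq_bigr => j _ do rewrite vC_hS.
by apply: combS => c; rewrite -vC_suppH.
Qed.
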